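(* For every signature $\Sigma$, the data $\mathcal F_\Sigma$ described below form a category with families. Moreover, if the variable system has the de Bruijn property, then $\mathcal F_\Sigma$ is a contextual category with families.
   Context: Fix an infinite set $V$ of variables with decidable equality, and a fresh variable provider: functions $\varphi,\mathsf{fr}$ assigning to each finite $X\subseteq V$ an inhabited subset $\varphi(X)\subseteq V\setminus X$ and an element $\mathsf{fr}(X)\in\varphi(X)$. The variable system has the de Bruijn property if $\varphi(X)=\{\mathsf{fr}(X)\}$ for all finite $X$. Fix disjoint sets $F$ (function symbols) and $T$ (type symbols) with decidable equality. Preelements are terms built from variables and symbols of $F$; a pretype is $S(t_1,\ldots,t_n)$ with $S\in T$ and $t_i$ preelements. $\mathrm{V}(E)$ is the set of variables of an expression $E$, $\equiv$ is syntactic identity, and $E[\bar a/\bar x]$ is simultaneous substitution. A precontext is a sequence $\Gamma=x_1:A_1,\ldots,x_n:A_n$ of pretypes with $x_k\in\varphi(\{x_1,\ldots,x_{k-1}\})$ and $\mathrm{V}(A_k)\subseteq\{x_1,\ldots,x_{k-1}\}$; $\mathrm{OV}(\Gamma)=x_1,\ldots,x_n$, $\mathrm{V}(\Gamma)=\{x_1,\ldots,x_n\}$, $\mathrm{Fresh}(\Gamma)=\varphi(\mathrm{V}(\Gamma))$, $\mathrm{fresh}(\Gamma)=\mathsf{fr}(\mathrm{V}(\Gamma))$, $E[\bar a/\Gamma]=E[\bar a/x_1,\ldots,x_n]$. Top variables: $\mathrm{TV}(\langle\rangle)=\emptyset$, $\mathrm{TV}(\Gamma,x:A)=(\mathrm{TV}(\Gamma)\setminus\mathrm{V}(A))\cup\{x\}$.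 A determining sequence for $\Gamma$ is a strictly increasing $\bar i=i_1,\ldots,i_k$ in $\{1,\ldots,n\}$ with $\mathrm{TV}(\Gamma)\subseteq\{x_{i_1},\ldots,x_{i_k}\}$; for $\bar a=a_1,\ldots,a_n$ put $\bar a_{\bar i}=a_{i_1},\ldots,a_{i_k}$. A type predeclaration is $(\Gamma,S,\bar i)$ with $S\in T$, $\bar i$ determining; a function predeclaration is $(\Gamma,f,\bar i,U)$ with $f\in F$, $\bar i$ determining, $U$ a pretype with $\mathrm{V}(U)\subseteq\mathrm{V}(\Gamma)$. A presignature is a set $\Sigma$ of predeclarations with no symbol declared twice. Judgements are ''$\Gamma$ context'', ''$A$ type $(\Gamma)$'', ''$a:A\ (\Gamma)$''. $\mathcal{J}(\Sigma)$ is the smallest set of judgements closed under: (R1) $\langle\rangle$ context; (R2) from $\Gamma$ context and $A$ type $(\Gamma)$ infer $\Gamma,x:A$ context, for $x\in\mathrm{Fresh}(\Gamma)$; (R3) from $x_1:A_1,\ldots,x_n:A_n$ context infer $x_i:A_i\ (x_1:A_1,\ldots,x_n:A_n)$; (R4) if $(\Gamma,S,\bar i)\in\Sigma$ and $\bar a:\Delta\to\Gamma$, infer $S(\bar a_{\bar i})$ type $(\Delta)$; (R5) if $(\Gamma,f,\bar i,U)\in\Sigma$, $\bar a:\Delta\to\Gamma$ and $U[\bar a/\Gamma]$ type $(\Delta)$, infer $f(\bar a_{\bar i}):U[\bar a/\Gamma]\ (\Delta)$. Here, for $\Gamma=x_1:A_1,\ldots,x_n:A_n$, the context map ''$\bar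 a:\Delta\to\Gamma$'' abbreviates the $n+2$ judgements $\Delta$ context, $\Gamma$ context, and $a_k:A_k[a_1,\ldots,a_{k-1}/x_1,\ldots,x_{k-1}]\ (\Delta)$ for $k=1,\ldots,n$. $\Sigma$ is a signature if ($\Gamma$ context)$\in\mathcal{J}(\Sigma)$ whenever $(\Gamma,S,\bar i)\in\Sigma$, and ($U$ type $(\Gamma)$)$\in\mathcal{J}(\Sigma)$ whenever $(\Gamma,f,\bar i,U)\in\Sigma$. A category with families (cwf) consists of: a category $\mathcal C$ with a terminal object $\top$; for each object $\Gamma$ a class $\mathrm{Ty}(\Gamma)$, and for $f:\Delta\to\Gamma$ a function $A\mapsto A\{f\}:\mathrm{Ty}(\Gamma)\to\mathrm{Ty}(\Delta)$ with $A\{1\}=A$, $A\{f\circ g\}=A\{f\}\{g\}$; for $A\in\mathrm{Ty}(\Gamma)$ an object $\Gamma.A$ and a morphism $\mathrm{p}(A)=\mathrm{p}_\Gamma(A):\Gamma.A\to\Gamma$; for $A\in\mathrm{Ty}(\Gamma)$ a class $\mathrm{Tm}(\Gamma,A)$ and for $f:\Delta\to\Gamma$ a function $a\mapsto a\{f\}:\mathrm{Tm}(\Gamma,A)\to\mathrm{Tm}(\Delta,A\{f\})$ with $a\{1\}=a$, $a\{f\circ g\}=a\{f\}\{g\}$; for each $A\in\mathrm{Ty}(\Gamma)$ an element $\mathrm{v}_A\in\mathrm{Tm}(\Gamma.A,A\{\mathrm{p}(A)\})$; for $f:\Delta\to\Gamma$ and $a\in\mathrm{Tm}(\Delta,A\{f\})$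 a morphism $\langle f,a\rangle_A:\Delta\to\Gamma.A$ such that $\mathrm{p}(A)\circ\langle f,a\rangle_A=f$, $\mathrm{v}_A\{\langle f,a\rangle_A\}=a$, $\langle\mathrm{p}(A)\circ h,\mathrm{v}_A\{h\}\rangle_A=h$ for every $h:\Delta\to\Gamma.A$, and $\langle f,a\rangle_A\circ g=\langle f\circ g,a\{g\}\rangle_A$. A cwf is contextual if every object $\Gamma$ equals $\top.A_1.\cdots.A_n$ for a unique sequence $A_1\in\mathrm{Ty}(\top)$, $A_2\in\mathrm{Ty}(\top.A_1)$, $\ldots$, $A_n\in\mathrm{Ty}(\top.A_1.\cdots.A_{n-1})$, $n\ge 0$. The data $\mathcal F_\Sigma$: objects are precontexts $\Gamma$ with ($\Gamma$ context)$\in\mathcal{J}(\Sigma)$; morphisms $\Delta\to\Gamma$ are triples $(\Delta,\Gamma,\bar a)$ with $\bar a:\Delta\to\Gamma$ a context map in $\mathcal{J}(\Sigma)$; composition $(\Gamma,\Theta,\bar t)\circ(\Delta,\Gamma,\bar s)=(\Delta,\Theta,(t_1[\bar s/\Gamma],\ldots,t_k[\bar s/\Gamma]))$; identity $(\Gamma,\Gamma,\mathrm{OV}(\Gamma))$; terminal object the empty context $\langle\rangle$. $\mathrm{Ty}(\Gamma)=\{(\Gamma,A): (A\text{ type }(\Gamma))\in\mathcal{J}(\Sigma)\}$ with $(\Gamma,A)\{(\Delta,\Gamma,\bar a)\}=(\Delta,A[\bar a/\Gamma])$; $\mathrm{Tm}(\Gamma,(\Gamma,A))=\{((\Gamma,A),a):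 (a:A\ (\Gamma))\in\mathcal{J}(\Sigma)\}$ with $((\Gamma,A),a)\{(\Delta,\Gamma,\bar a)\}=((\Delta,A[\bar a/\Gamma]),a[\bar a/\Gamma])$. For $\mathrm S=(\Gamma,S)\in\mathrm{Ty}(\Gamma)$: $\Gamma.\mathrm S=\langle\Gamma,\mathrm{fresh}(\Gamma):S\rangle$, $\mathrm{p}_\Gamma(\mathrm S)=(\Gamma.\mathrm S,\Gamma,\mathrm{OV}(\Gamma))$, $\mathrm{v}_{\mathrm S}=((\Gamma.\mathrm S,S),\mathrm{fresh}(\Gamma))$, and $\langle(\Delta,\Gamma,\bar s),((\Delta,S[\bar s/\Gamma]),b)\rangle_{\mathrm S}=(\Delta,\Gamma.\mathrm S,(\bar s,b))$. *)

(* Defs.v *)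
From Stdlib Require Import List Arith Sorted.
Import ListNotations.
Set Implicit Arguments.

(* Variable systems: an infinite set V of variables with decidable     *)
(* equality, and a fresh variable provider (phi, fr).  Finite subsets   *)
(* X of V are represented by lists; phi and fr are required to depend   *)
(* only on the set of elements of the list (phi_ext, fr_ext).           *)
Record VarSystem := {
  var : Type;
  var_eq_dec : forall x y : var, {x = y} + {x <> y};
  var_infinite : forall X : list var, exists x, ~ In x X;
  phi : list var -> var -> Prop;
  fr : list var -> var;
  phi_ext : forall X Y : list var, (forall x, In x X <-> In x Y) ->
            forall y, phi X y <-> phi Y y;
  fr_ext : forall X Y : list var, (forall x, In x X <-> In x Y) -> fr X = fr Y;
  phi_avoid : forall X y, phi X y -> ~ In y X;
  fr_phi : forall X, phi X (fr X)
}.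

Definition de_Bruijn (VS : VarSystem) : Prop :=
  forall (X : list (var VS)) (y : var VS), phi VS X y <-> y = fr VS X.

(* Objects, morphisms, types, terms are raw elements together with      *)
(* membership predicates (the "classes" of the paper); equality is      *)
(* Leibniz equality of raw elements.                                    *)
(*   isMor f D G  means  f : D -> G                                     *)
(*   isTy G A     means  A in Ty(G)                                     *)
(*   isTm G A a   means  a in Tm(G, A)                                  *)
(*   tsub A f = A{f},  msub a f = a{f},  ext G A = G.A,                 *)
(*   pr G A = p_G(A),  vr G A = v_A,  pair G A f a = <f, a>_A            *)
Record cwf_data := {
  Ob : Type;
  Mor : Type;
  isOb : Ob -> Prop;
  isMor : Mor -> Ob -> Ob -> Prop;
  comp : Mor -> Mor -> Mor;          (* comp g f = g o f *)
  idm : Ob -> Mor;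
  top : Ob;
  TyE : Type;
  isTy : Ob -> TyE -> Prop;
  tsub : TyE -> Mor -> TyE;
  TmE : Type;
  isTm : Ob -> TyE -> TmE -> Prop;
  msub : TmE -> Mor -> TmE;
  ext : Ob -> TyE -> Ob;
  pr : Ob -> TyE -> Mor;
  vr : Ob -> TyE -> TmE;
  pair : Ob -> TyE -> Mor -> TmE -> Mor
}.

Definition is_cwf (C : cwf_data) : Prop :=
  (forall D G H f g, isOb C D -> isOb C G -> isOb C H ->
     isMor C f D G -> isMor C g G H -> isMor C (comp C g f) D H) /\
  (forall G, isOb C G -> isMor C (idm C G) G G) /\
  (forall A B D E f g h, isOb C A -> isOb C B -> isOb C D -> isOb C E ->
     isMor C f A B -> isMor C g B D -> isMor C h D E ->
     comp C h (comp C g f) = comp C (comp C h g) f) /\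
  (forall D G f, isOb C D -> isOb C G -> isMor C f D G ->
     comp C (idm C G) f = f /\ comp C f (idm C D) = f) /\
  isOb C (top C) /\
  (forall G, isOb C G -> exists f, isMor C f G (top C) /\
     forall g, isMor C g G (top C) -> g = f) /\
  (forall D G f A, isOb C D -> isOb C G -> isMor C f D G -> isTy C G A ->
     isTy C D (tsub C A f)) /\
  (forall G A, isOb C G -> isTy C G A -> tsub C A (idm C G) = A) /\
  (forall E D G f g A, isOb C E -> isOb C D -> isOb C G ->
     isMor C f D G -> isMor C g E D -> isTy C G A ->
     tsub C A (comp C f g) = tsub C (tsub C A f) g) /\
  (forall D G f A a, isOb C D -> isOb C G -> isMor C f D G -> isTy C G A ->
     isTm C G A a -> isTm C D (tsub C A f) (msub C a f)) /\
  (forall G A a, isOb C G -> isTy C G A -> isTm C G A a ->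
     msub C a (idm C G) = a) /\
  (forall E D G f g A a, isOb C E -> isOb C D -> isOb C G ->
     isMor C f D G -> isMor C g E D -> isTy C G A -> isTm C G A a ->
     msub C a (comp C f g) = msub C (msub C a f) g) /\
  (forall G A, isOb C G -> isTy C G A ->
     isOb C (ext C G A) /\ isMor C (pr C G A) (ext C G A) G) /\
  (forall G A, isOb C G -> isTy C G A ->
     isTm C (ext C G A) (tsub C A (pr C G A)) (vr C G A)) /\
  (forall D G A f a, isOb C D -> isOb C G -> isTy C G A -> isMor C f D G ->
     isTm C D (tsub C A f) a ->
     isMor C (pair C G A f a) D (ext C G A) /\
     comp C (pr C G A) (pair C G A f a) = f /\
     msub C (vr C G A) (pair C G A f a) = a) /\
  (forall D G A h, isOb C D -> isOb C G -> isTy C G A ->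
     isMor C h D (ext C G A) ->
     pair C G A (comp C (pr C G A) h) (msub C (vr C G A) h) = h) /\
  (forall E D G A f a g, isOb C E -> isOb C D -> isOb C G -> isTy C G A ->
     isMor C f D G -> isTm C D (tsub C A f) a -> isMor C g E D ->
     comp C (pair C G A f a) g = pair C G A (comp C f g) (msub C a g)).

Fixpoint tele (C : cwf_data) (G0 : Ob C) (As : list (TyE C)) : Prop :=
  match As with
  | [] => True
  | A :: As' => isTy C G0 A /\ tele C (ext C G0 A) As'
  end.

Fixpoint tele_end (C : cwf_data) (G0 : Ob C) (As : list (TyE C)) : Ob C :=
  match As with
  | [] => G0
  | A :: As' => tele_end C (ext C G0 A) As'
  end.

Definition is_contextual_cwf (C : cwf_data) : Prop :=
  is_cwf C /\
  forall G, isOb C G ->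
    exists! As, tele C (top C) As /\ tele_end C (top C) As = G.

Section Syntax.
Context (VS : VarSystem) (F T : Type).
Local Notation V := (var VS).

Inductive preel : Type :=
| PVar (x : V)
| PApp (f : F) (ts : list preel).

Inductive pretype : Type :=
| PTy (S : T) (ts : list preel).

Fixpoint vars_el (t : preel) : list V :=
  match t with
  | PVar x => [x]
  | PApp _ ts => flat_map vars_el ts
  end.

Definition vars_ty (A : pretype) : list V :=
  match A with PTy _ ts => flat_map vars_el ts end.

Fixpoint subst_el (s : V -> preel) (t : preel) : preel :=
  match t with
  | PVar x => s x
  | PApp f ts => PApp f (map (subst_el s) ts)
  end.

Definition subst_ty (s : V -> preel) (A : pretype) : pretype :=
  match A with PTy S0 ts => PTy S0 (map (subst_el s) ts) end.

Fixpoint lookup (xs : list V) (as_ : list preel) (x : V) : option preel :=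
  match xs, as_ with
  | x' :: xs', a :: as' =>
      if var_eq_dec VS x x' then Some a else lookup xs' as' x
  | _, _ => None
  end.

Definition sub (xs : list V) (as_ : list preel) : V -> preel :=
  fun x => match lookup xs as_ x with Some a => a | None => PVar x end.

Inductive ctx : Type :=
| CEmpty
| CExt (G : ctx) (x : V) (A : pretype).

Fixpoint ctx_list (G : ctx) : list (V * pretype) :=
  match G with
  | CEmpty => []
  | CExt G' x A => ctx_list G' ++ [(x, A)]
  end.

Definition OV (G : ctx) : list V := map fst (ctx_list G).

Definition fresh (G : ctx) : V := fr VS (OV G).

Fixpoint is_precontext (G : ctx) : Prop :=
  match G with
  | CEmpty => True
  | CExt G' x A =>
      is_precontext G' /\ phi VS (OV G') x /\ incl (vars_ty A) (OV G')
  end.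

Definition subst_el_ctx (as_ : list preel) (G : ctx) (t : preel) : preel :=
  subst_el (sub (OV G) as_) t.
Definition subst_ty_ctx (as_ : list preel) (G : ctx) (A : pretype) : pretype :=
  subst_ty (sub (OV G) as_) A.

Fixpoint TV (G : ctx) : V -> Prop :=
  match G with
  | CEmpty => fun _ => False
  | CExt G' x A => fun y => (TV G' y /\ ~ In y (vars_ty A)) \/ y = x
  end.

(* determining sequences (1-based indices as in the paper) *)
Definition determining (G : ctx) (is_ : list nat) : Prop :=
  StronglySorted lt is_ /\
  (forall i, In i is_ -> 1 <= i <= length (OV G)) /\
  (forall y, TV G y -> exists i, In i is_ /\ nth_error (OV G) (i - 1) = Some y).

Definition select (as_ : list preel) (is_ : list nat) : list preel :=
  flat_map (fun i => match nth_error as_ (i - 1) with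
                     | Some a => [a] | None => [] end) is_.

Record presig := {
  sig_ty : ctx -> T -> list nat -> Prop;
  sig_fn : ctx -> F -> list nat -> pretype -> Prop
}.

Definition is_presignature (Sg : presig) : Prop :=
  (forall G S is_, sig_ty Sg G S is_ -> is_precontext G /\ determining G is_) /\
  (forall G f is_ U, sig_fn Sg G f is_ U ->
     is_precontext G /\ determining G is_ /\ incl (vars_ty U) (OV G)) /\
  (forall G S is_ G' is', sig_ty Sg G S is_ -> sig_ty Sg G' S is' ->
     G = G' /\ is_ = is') /\
  (forall G f is_ U G' is' U', sig_fn Sg G f is_ U -> sig_fn Sg G' f is' U' ->
     G = G' /\ is_ = is' /\ U = U').

Inductive judg : Type :=
| JCtx (G : ctx)
| JTy (G : ctx) (A : pretype)
| JTm (G : ctx) (a : preel) (A : pretype).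

Definition ctxmap (Dj : judg -> Prop) (D G : ctx) (as_ : list preel) : Prop :=
  Dj (JCtx D) /\ Dj (JCtx G) /\ length as_ = length (ctx_list G) /\
  forall k x A a, nth_error (ctx_list G) k = Some (x, A) ->
    nth_error as_ k = Some a ->
    Dj (JTm D a (subst_ty (sub (firstn k (OV G)) (firstn k as_)) A)).

Inductive deriv (Sg : presig) : judg -> Prop :=
| R1 : deriv Sg (JCtx CEmpty)
| R2 : forall G A x, deriv Sg (JCtx G) -> deriv Sg (JTy G A) ->
       phi VS (OV G) x -> deriv Sg (JCtx (CExt G x A))
| R3 : forall G x A, deriv Sg (JCtx G) -> In (x, A) (ctx_list G) ->
       deriv Sg (JTm G (PVar x) A)
| R4 : forall G S is_ D as_, sig_ty Sg G S is_ -> ctxmap (deriv Sg) D G as_ ->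
       deriv Sg (JTy D (PTy S (select as_ is_)))
| R5 : forall G f is_ U D as_, sig_fn Sg G f is_ U -> ctxmap (deriv Sg) D G as_ ->
       deriv Sg (JTy D (subst_ty_ctx as_ G U)) ->
       deriv Sg (JTm D (PApp f (select as_ is_)) (subst_ty_ctx as_ G U)).

Definition is_signature (Sg : presig) : Prop :=
  is_presignature Sg /\
  (forall G S is_, sig_ty Sg G S is_ -> deriv Sg (JCtx G)) /\
  (forall G f is_ U, sig_fn Sg G f is_ U -> deriv Sg (JTy G U)).

Definition FS_isOb (Sg : presig) (G : ctx) : Prop :=
  is_precontext G /\ deriv Sg (JCtx G).

Definition FS_isMor (Sg : presig) (m : ctx * ctx * list preel) (D G : ctx) : Prop :=
  FS_isOb Sg D /\ FS_isOb Sg G /\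
  exists as_, m = (D, G, as_) /\ ctxmap (deriv Sg) D G as_.

Definition FS_comp (g f : ctx * ctx * list preel) : ctx * ctx * list preel :=
  match g, f with
  | (G, Th, ts), (D, _, ss) => (D, Th, map (subst_el_ctx ss G) ts)
  end.

Definition FS_id (G : ctx) : ctx * ctx * list preel :=
  (G, G, map PVar (OV G)).

Definition FS_isTy (Sg : presig) (G : ctx) (T' : ctx * pretype) : Prop :=
  exists A, T' = (G, A) /\ deriv Sg (JTy G A).

Definition FS_tsub (T' : ctx * pretype) (f : ctx * ctx * list preel) : ctx * pretype :=
  match T', f with
  | (G, A), (D, _, as_) => (D, subst_ty_ctx as_ G A)
  end.

Definition FS_isTm (Sg : presig) (G : ctx) (T' : ctx * pretype)
  (t : (ctx * pretype) * preel) : Prop :=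
  exists A a, T' = (G, A) /\ t = ((G, A), a) /\ deriv Sg (JTm G a A).

Definition FS_msub (t : (ctx * pretype) * preel) (f : ctx * ctx * list preel)
  : (ctx * pretype) * preel :=
  match t, f with
  | ((G, A), a), (D, _, as_) => ((D, subst_ty_ctx as_ G A), subst_el_ctx as_ G a)
  end.

Definition FS_ext (_ : ctx) (T' : ctx * pretype) : ctx :=
  match T' with (G, S0) => CExt G (fresh G) S0 end.

Definition FS_pr (G0 : ctx) (T' : ctx * pretype) : ctx * ctx * list preel :=
  match T' with (G, S0) => (FS_ext G0 T', G, map PVar (OV G)) end.

Definition FS_vr (G0 : ctx) (T' : ctx * pretype) : (ctx * pretype) * preel :=
  match T' with (G, S0) => ((FS_ext G0 T', S0), PVar (fresh G)) end.

Definition FS_pair (G0 : ctx) (T' : ctx * pretype) (f : ctx * ctx * list preel)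
  (b : (ctx * pretype) * preel) : ctx * ctx * list preel :=
  match f, b with
  | (D, _, ss), (_, bb) => (D, FS_ext G0 T', ss ++ [bb])
  end.

Definition F_Sigma (Sg : presig) : cwf_data := {|
  Ob := ctx;
  Mor := ctx * ctx * list preel;
  isOb := FS_isOb Sg;
  isMor := FS_isMor Sg;
  comp := FS_comp;
  idm := FS_id;
  top := CEmpty;
  TyE := ctx * pretype;
  isTy := FS_isTy Sg;
  tsub := FS_tsub;
  TmE := (ctx * pretype) * preel;
  isTm := FS_isTm Sg;
  msub := FS_msub;
  ext := FS_ext;
  pr := FS_pr;
  vr := FS_vr;
  pair := FS_pair
|}.

End Syntax.

(* Main.v *)
Require Import Defs.
From Stdlib Require Import List Arith Sorted Lia.
Import ListNotations.
Set Implicit Arguments. Unset Strict Implicit.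

Section S.
Context (VS : VarSystem) (F T : Type).
Local Notation V := (var VS).
Local Notation preel := (preel VS F).
Local Notation pretype := (pretype VS F T).
Local Notation ctx := (ctx VS F T).

Fixpoint preel_ind2 (P : preel -> Prop) (HV : forall x, P (PVar VS F x))
  (HA : forall f ts, Forall P ts -> P (PApp f ts)) (t : preel) : P t :=
  match t with
  | PVar _ _ x => HV x
  | PApp f ts => HA f ts ((fix go l := match l return Forall P l with
        | [] => Forall_nil _ | t :: l => Forall_cons _ (preel_ind2 HV HA t) (go l) end) ts)
  end.

Lemma subst_el_comp (s1 s2 : V -> preel) t :
  subst_el s2 (subst_el s1 t) = subst_el (fun x => subst_el s2 (s1 x)) t.
Proof.
  induction t using preel_ind2; simpl; auto.
  f_equal. rewrite map_map. induction H; simpl; f_equal; auto.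
Qed.

Lemma subst_el_ext (s s' : V -> preel) t :
  (forall x, In x (vars_el t) -> s x = s' x) -> subst_el s t = subst_el s' t.
Proof.
  induction t using preel_ind2; simpl; intros Hs; auto.
  f_equal. induction H; simpl in *; f_equal; auto.
  - apply H. intros; apply Hs, in_or_app; auto.
  - apply IHForall. intros; apply Hs, in_or_app; auto.
Qed.

Lemma subst_el_id t : subst_el (fun x => PVar VS F x) t = t.
Proof.
  induction t using preel_ind2; simpl; auto.
  f_equal. induction H; simpl; f_equal; auto.
Qed.

Lemma subst_ty_comp (s1 s2 : V -> preel) (A : pretype) :
  subst_ty s2 (subst_ty s1 A) = subst_ty (fun x => subst_el s2 (s1 x)) A.
Proof.
  destruct A; simpl. f_equal. rewrite map_map. apply map_ext. intros; apply subst_el_comp.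
Qed.

Lemma subst_ty_ext (s s' : V -> preel) (A : pretype) :
  (forall x, In x (vars_ty A) -> s x = s' x) -> subst_ty s A = subst_ty s' A.
Proof.
  destruct A; simpl; intros H. f_equal. apply map_ext_in. intros a Ha.
  apply subst_el_ext. intros; apply H. apply in_flat_map. eauto.
Qed.

Lemma subst_ty_id (A : pretype) : subst_ty (fun x => PVar VS F x) A = A.
Proof. destruct A; simpl; f_equal. induction ts; simpl; f_equal; auto using subst_el_id. Qed.

Lemma lookup_map (xs : list V) (as_ : list preel) (f : preel -> preel) x :
  lookup xs (map f as_) x = option_map f (lookup xs as_ x).
Proof.
  revert as_; induction xs; destruct as_; simpl; auto.
  destruct (var_eq_dec VS x a); auto.
Qed.

Lemma lookup_PVar (xs : list V) x : sub xs (map (PVar VS F) xs) x = PVar VS F x.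
Proof.
  unfold sub. induction xs; simpl; auto.
  destruct (var_eq_dec VS x a); subst; auto.
Qed.

Lemma sub_PVar_fun (xs : list V) : forall x, sub xs (map (PVar VS F) xs) x = PVar VS F x.
Proof. apply lookup_PVar. Qed.

Lemma lookup_in (xs : list V) (as_ : list preel) x :
  In x xs -> length xs <= length as_ -> exists a, lookup xs as_ x = Some a.
Proof.
  revert as_; induction xs; destruct as_; simpl; intros; try lia; try tauto.
  destruct (var_eq_dec VS x a); eauto.
  destruct H; [congruence|]. apply IHxs; auto; lia.
Qed.

Lemma lookup_notin (xs : list V) (as_ : list preel) x :
  ~ In x xs -> lookup xs as_ x = None.
Proof.
  revert as_; induction xs; destruct as_; simpl; intros; auto.
  destruct (var_eq_dec VS x a); subst; auto. tauto.
Qed.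

Lemma lookup_firstn k (xs : list V) (as_ : list preel) y :
  In y (firstn k xs) -> lookup xs as_ y = lookup (firstn k xs) (firstn k as_) y.
Proof.
  revert xs as_; induction k; intros xs as_ H; simpl in *; [tauto|].
  destruct xs; simpl in *; [tauto|]. destruct as_; simpl; auto.
  destruct (var_eq_dec VS y v); auto. apply IHk. destruct H; congruence.
Qed.

Lemma lookup_nth (xs : list V) (as_ : list preel) k x :
  NoDup xs -> nth_error xs k = Some x -> lookup xs as_ x = nth_error as_ k.
Proof.
  revert as_ k; induction xs; intros as_ k Hn Hk; [destruct k; discriminate|].
  inversion Hn; subst. destruct k; simpl in Hk.
  - inversion Hk; subst. destruct as_; simpl; auto.
    destruct (var_eq_dec VS x x); congruence.
  - destruct as_; simpl.
    + destruct k; auto.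
    + destruct (var_eq_dec VS x a); subst.
      * exfalso. apply H1. eapply nth_error_In; eauto.
      * apply IHxs; auto.
Qed.

Lemma lookup_app (xs ys : list V) (as_ bs : list preel) x :
  length xs = length as_ ->
  lookup (xs ++ ys) (as_ ++ bs) x =
  match lookup xs as_ x with Some a => Some a | None => lookup ys bs x end.
Proof.
  revert as_; induction xs; destruct as_; simpl; intros; try discriminate; auto.
  destruct (var_eq_dec VS x a); auto.
Qed.

Lemma map_sub_self (xs : list V) (ss : list preel) :
  NoDup xs -> length xs = length ss -> map (sub xs ss) xs = ss.
Proof.
  revert ss; induction xs; destruct ss; simpl; intros; try discriminate; auto.
  inversion H; subst. unfold sub at 1; simpl.
  destruct (var_eq_dec VS a a); [|congruence]. f_equal.
  rewrite <- (IHxs ss) at 2; auto. apply map_ext_in. intros y Hy.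
  unfold sub; simpl. destruct (var_eq_dec VS y a); subst; auto. tauto.
Qed.

Lemma sub_comp_el (xs : list V) (as_ : list preel) s2 t :
  incl (vars_el t) xs -> length xs <= length as_ ->
  subst_el s2 (subst_el (sub xs as_) t) = subst_el (sub xs (map (subst_el s2) as_)) t.
Proof.
  intros Hi Hl. rewrite subst_el_comp. apply subst_el_ext. intros x Hx.
  destruct (@lookup_in xs as_ x (Hi x Hx) Hl) as [a Ha].
  unfold sub. rewrite lookup_map, Ha. reflexivity.
Qed.

Lemma sub_comp_ty (xs : list V) (as_ : list preel) s2 (A : pretype) :
  incl (vars_ty A) xs -> length xs <= length as_ ->
  subst_ty s2 (subst_ty (sub xs as_) A) = subst_ty (sub xs (map (subst_el s2) as_)) A.
Proof.
  intros Hi Hl. rewrite subst_ty_comp. apply subst_ty_ext. intros x Hx.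
  destruct (@lookup_in xs as_ x (Hi x Hx) Hl) as [a Ha].
  unfold sub. rewrite lookup_map, Ha. reflexivity.
Qed.


Lemma OV_ext (G : ctx) x A : OV (CExt G x A) = OV G ++ [x].
Proof. unfold OV; simpl. rewrite map_app. reflexivity. Qed.

Lemma length_OV (G : ctx) : length (OV G) = length (ctx_list G).
Proof. unfold OV; apply length_map. Qed.

Lemma pc_nodup (G : ctx) : is_precontext G -> NoDup (OV G).
Proof.
  induction G; simpl; intros H. constructor.
  destruct H as [H1 [H2 H3]]. rewrite OV_ext.
  apply NoDup_app; auto. constructor; auto; constructor.
  intros y Hy Hy'. destruct Hy' as [<-|[]]. eapply phi_avoid; eauto.
Qed.

Lemma pc_nth (G : ctx) k x A : is_precontext G ->
  nth_error (ctx_list G) k = Some (x, A) ->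
  incl (vars_ty A) (firstn k (OV G)) /\ nth_error (OV G) k = Some x.
Proof.
  intros HG Hk. split.
  2:{ unfold OV. rewrite nth_error_map, Hk. reflexivity. }
  revert k Hk; induction G; simpl; intros k Hk. destruct k; discriminate.
  destruct HG as [H1 [H2 H3]]. rewrite OV_ext.
  destruct (Nat.lt_ge_cases k (length (ctx_list G))).
  - rewrite nth_error_app1 in Hk by auto. rewrite firstn_app.
    rewrite length_OV. replace (k - length (ctx_list G)) with 0 by lia. simpl.
    rewrite app_nil_r. auto.
  - rewrite nth_error_app2 in Hk by auto.
    destruct (k - length (ctx_list G)) eqn:E; simpl in Hk; [|destruct n; discriminate].
    inversion Hk; subst. replace k with (length (OV G)) by (rewrite length_OV; lia).
    rewrite firstn_app, Nat.sub_diag, firstn_all. simpl. rewrite app_nil_r. auto.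
Qed.

Lemma pc_in (G : ctx) x A : is_precontext G -> In (x, A) (ctx_list G) ->
  incl (vars_ty A) (OV G) /\ In x (OV G).
Proof.
  intros HG Hi. destruct (In_nth_error _ _ Hi) as [k Hk].
  destruct (pc_nth HG Hk) as [H1 H2]. split.
  - intros y Hy. apply H1 in Hy. rewrite <- (firstn_skipn k (OV G)). apply in_or_app; auto.
  - eapply nth_error_In; eauto.
Qed.

Section Ind.
Context (Sg : presig VS F T).
Local Notation judg := (judg VS F T).
Variable P : judg -> Prop.
Hypothesis H1 : P (JCtx (CEmpty VS F T)).
Hypothesis H2 : forall (G : ctx) A x, deriv Sg (JCtx G) -> P (JCtx G) ->
  deriv Sg (JTy G A) -> P (JTy G A) -> phi VS (OV G) x -> P (JCtx (CExt G x A)).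
Hypothesis H3 : forall (G : ctx) x A, deriv Sg (JCtx G) -> P (JCtx G) ->
  In (x, A) (ctx_list G) -> P (JTm G (PVar VS F x) A).
Hypothesis H4 : forall (G : ctx) S is_ D as_, sig_ty Sg G S is_ ->
  ctxmap (fun j => deriv Sg j /\ P j) D G as_ -> P (JTy D (PTy S (select as_ is_))).
Hypothesis H5 : forall (G : ctx) f is_ U D as_, sig_fn Sg G f is_ U ->
  ctxmap (fun j => deriv Sg j /\ P j) D G as_ ->
  deriv Sg (JTy D (subst_ty_ctx as_ G U)) -> P (JTy D (subst_ty_ctx as_ G U)) ->
  P (JTm D (PApp f (select as_ is_)) (subst_ty_ctx as_ G U)).

Fixpoint deriv_ind2 (j : judg) (d : deriv Sg j) {struct d} : P j.
Proof.
  destruct d as [|G A x d1 d2 h|G x A d1 h|G S is_ D as_ hs cm|G f is_ U D as_ hs cm d3].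
  - exact H1.
  - exact (H2 d1 (deriv_ind2 _ d1) d2 (deriv_ind2 _ d2) h).
  - exact (H3 d1 (deriv_ind2 _ d1) h).
  - apply (H4 hs). destruct cm as [c1 [c2 [cl cf]]].
    refine (conj (conj c1 (deriv_ind2 _ c1)) (conj (conj c2 (deriv_ind2 _ c2)) (conj cl _))).
    intros k x A a e1 e2. exact (conj (cf k x A a e1 e2) (deriv_ind2 _ (cf k x A a e1 e2))).
  - apply (H5 hs); [|exact d3|exact (deriv_ind2 _ d3)]. destruct cm as [c1 [c2 [cl cf]]].
    refine (conj (conj c1 (deriv_ind2 _ c1)) (conj (conj c2 (deriv_ind2 _ c2)) (conj cl _))).
    intros k x A a e1 e2. exact (conj (cf k x A a e1 e2) (deriv_ind2 _ (cf k x A a e1 e2))).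
Defined.
End Ind.

Lemma select_in (as_ : list preel) is_ a : In a (select as_ is_) -> In a as_.
Proof.
  unfold select. intros H. apply in_flat_map in H as [i [_ Hi]].
  destruct (nth_error as_ (i - 1)) eqn:E; simpl in Hi; [|tauto].
  destruct Hi as [<-|[]]. eapply nth_error_In; eauto.
Qed.

Lemma select_map (as_ : list preel) is_ (f : preel -> preel) :
  select (map f as_) is_ = map f (select as_ is_).
Proof.
  unfold select. induction is_; simpl; auto. rewrite map_app, IHis_, nth_error_map.
  destruct (nth_error as_ (a - 1)); reflexivity.
Qed.

Context (Sg : presig VS F T) (HSg : is_signature Sg).
Local Notation judg := (judg VS F T).

Definition WF (j : judg) : Prop :=
  match j with
  | JCtx G => is_precontext G
  | JTy G A => is_precontext G /\ incl (vars_ty A) (OV G)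
  | JTm G a A => is_precontext G /\ incl (vars_el a) (OV G) /\ incl (vars_ty A) (OV G)
  end.

Lemma cm_vars (D G : ctx) (as_ : list preel) :
  ctxmap (fun j => deriv Sg j /\ WF j) D G as_ ->
  forall a, In a as_ -> incl (vars_el a) (OV D).
Proof.
  intros [_ [_ [cl cf]]] a Ha. destruct (In_nth_error _ _ Ha) as [k Hk].
  assert (k < length (ctx_list G)) by (rewrite <- cl; apply nth_error_Some; congruence).
  destruct (nth_error (ctx_list G) k) as [[x A]|] eqn:E.
  2:{ apply nth_error_None in E; lia. }
  destruct (cf k x A a E Hk) as [_ [_ [? _]]]. auto.
Qed.

Lemma deriv_WF j : deriv Sg j -> WF j.
Proof.
  intros d. refine (@deriv_ind2 Sg WF _ _ _ _ _ j d); clear j d; simpl in *; intros.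
  - auto.
  - tauto.
  - destruct (pc_in H0 H1). split; auto. split; auto. intros y [<-|[]]; auto.
  - split. { destruct H0 as [[_ ?] _]. auto. }
    intros y Hy. apply in_flat_map in Hy as [a [Ha Hy]].
    eapply cm_vars; eauto. eapply select_in; eauto.
  - match goal with H : _ /\ incl _ _ |- _ => destruct H end. split; auto. split; auto.
    intros y Hy. simpl in Hy. apply in_flat_map in Hy as [a [Ha Hy]].
    eapply cm_vars; eauto. eapply select_in; eauto.
Qed.

Lemma cm_comp (Dj : judg -> Prop) (D G Th : ctx) (as_ : list preel) (s2 : V -> preel) :
  ctxmap Dj D G as_ -> is_precontext G -> deriv Sg (JCtx Th) ->
  (Dj (JCtx G) -> deriv Sg (JCtx G)) ->
  (forall k x A a, nth_error (ctx_list G) k = Some (x, A) -> nth_error as_ k = Some a ->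
     Dj (JTm D a (subst_ty (sub (firstn k (OV G)) (firstn k as_)) A)) ->
     deriv Sg (JTm Th (subst_el s2 a)
        (subst_ty s2 (subst_ty (sub (firstn k (OV G)) (firstn k as_)) A)))) ->
  ctxmap (deriv Sg) Th G (map (subst_el s2) as_).
Proof.
  intros [c1 [c2 [cl cf]]] HG HTh HDG Hf. split; [auto|]. split; [auto|].
  split. { rewrite length_map; auto. }
  intros k x A a' E1 E2. rewrite nth_error_map in E2.
  destruct (nth_error as_ k) as [a|] eqn:E3; simpl in E2; inversion E2; subst.
  specialize (Hf k x A a E1 E3 (cf k x A a E1 E3)).
  rewrite sub_comp_ty in Hf. { rewrite firstn_map. exact Hf. }
  - apply (pc_nth HG E1).
  - rewrite !length_firstn, length_OV, cl. lia.
Qed.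

Definition Subst (j : judg) : Prop :=
  match j with
  | JCtx _ => True
  | JTy D A => forall (Th : ctx) s, ctxmap (deriv Sg) Th D s ->
      deriv Sg (JTy Th (subst_ty (sub (OV D) s) A))
  | JTm D a A => forall (Th : ctx) s, ctxmap (deriv Sg) Th D s ->
      deriv Sg (JTm Th (subst_el (sub (OV D) s) a) (subst_ty (sub (OV D) s) A))
  end.

Lemma deriv_Subst j : deriv Sg j -> Subst j.
Proof.
  destruct HSg as [[Hp1 [Hp2 _]] _].
  intros d. refine (@deriv_ind2 Sg Subst _ _ _ _ _ j d); clear j d; simpl in *; intros; auto.
  -
    rename H1 into Hin, H2 into Hs. pose proof (deriv_WF H) as HG; simpl in HG.
    destruct (In_nth_error _ _ Hin) as [k Hk].
    destruct (pc_nth HG Hk) as [Hv Hx].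
    destruct Hs as [s1 [s2 [sl sf]]].
    assert (k < length s) by (rewrite sl; apply nth_error_Some; congruence).
    destruct (nth_error s k) as [a|] eqn:Ea. 2:{ apply nth_error_None in Ea; lia. }
    assert (Hsub : sub (OV G) s x = a).
    { unfold sub. rewrite (lookup_nth s (pc_nodup HG) Hx), Ea. reflexivity. }
    rewrite Hsub. specialize (sf k x A a Hk Ea).
    erewrite subst_ty_ext; [exact sf|]. intros y Hy. unfold sub.
    rewrite lookup_firstn with (k:=k); auto.
  -
    rename H0 into cm, H1 into Hs. simpl.
    rewrite <- select_map. apply (R4 S is_ (G:=G)); auto.
    destruct (Hp1 _ _ _ H) as [HG _].
    eapply cm_comp; eauto.
    + destruct Hs as [? _]; auto.
    + intros _; apply cm.
    + intros k x A a E1 E2 [_ Ha]. apply Ha; auto.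
  -
    rename H0 into cm, H3 into Hs. simpl.
    destruct (Hp2 _ _ _ _ H) as [HG [_ HU]].
    rewrite <- select_map. unfold subst_ty_ctx in *.
    rewrite sub_comp_ty; auto.
    2:{ destruct cm as [_ [_ [cl _]]]. rewrite length_OV, cl; auto. }
    apply (R5 (G:=G) f is_ U); auto.
    + eapply cm_comp; eauto.
      * destruct Hs as [? _]; auto.
      * intros _; apply cm.
      * intros k x A a E1 E2 [_ Ha]. apply Ha; auto.
    + unfold subst_ty_ctx. specialize (H2 Th s Hs).
      rewrite sub_comp_ty in H2; auto.
      destruct cm as [_ [_ [cl _]]]. rewrite length_OV, cl; auto.
Qed.

Lemma subst_lemma_ty (D Th : ctx) A s : deriv Sg (JTy D A) -> ctxmap (deriv Sg) Th D s ->
  deriv Sg (JTy Th (subst_ty (sub (OV D) s) A)).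
Proof. intros d. exact (deriv_Subst d Th s). Qed.

Lemma subst_lemma_tm (D Th : ctx) a A s : deriv Sg (JTm D a A) -> ctxmap (deriv Sg) Th D s ->
  deriv Sg (JTm Th (subst_el (sub (OV D) s) a) (subst_ty (sub (OV D) s) A)).
Proof. intros d. exact (deriv_Subst d Th s). Qed.

Lemma ctxmap_mono (P Q : judg -> Prop) (D G : ctx) as_ :
  (forall j, P j -> Q j) -> ctxmap P D G as_ -> ctxmap Q D G as_.
Proof. intros H [c1 [c2 [cl cf]]]. split; auto. split; auto. split; auto. intros; apply H; eauto. Qed.

Lemma cm_vars' (D G : ctx) (as_ : list preel) :
  ctxmap (deriv Sg) D G as_ -> forall a, In a as_ -> incl (vars_el a) (OV D).
Proof.
  intros H. apply (cm_vars (G:=G)). eapply ctxmap_mono; [|exact H].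
  intros j d; split; auto. apply deriv_WF; auto.
Qed.

Lemma cm_compose (D G Th : ctx) as_ s :
  ctxmap (deriv Sg) D G as_ -> ctxmap (deriv Sg) Th D s ->
  ctxmap (deriv Sg) Th G (map (subst_el (sub (OV D) s)) as_).
Proof.
  intros H1 H2. eapply cm_comp; eauto.
  - apply (deriv_WF (proj1 (proj2 H1))).
  - apply H2.
  - intros k x A a _ _ d. apply subst_lemma_tm; auto.
Qed.

Lemma subst_el_idsub (xs : list V) t : subst_el (sub xs (map (PVar VS F) xs)) t = t.
Proof.
  rewrite <- (subst_el_id t) at 2. apply subst_el_ext. intros; apply sub_PVar_fun.
Qed.

Lemma subst_ty_idsub (xs : list V) (A : pretype) : subst_ty (sub xs (map (PVar VS F) xs)) A = A.
Proof.
  rewrite <- (subst_ty_id A) at 2. apply subst_ty_ext. intros; apply sub_PVar_fun.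
Qed.

Lemma cm_pr (G G' : ctx) : deriv Sg (JCtx G') -> deriv Sg (JCtx G) ->
  (forall p, In p (ctx_list G) -> In p (ctx_list G')) ->
  ctxmap (deriv Sg) G' G (map (PVar VS F) (OV G)).
Proof.
  intros H1 H2 Hi. split; auto. split; auto. split.
  { rewrite length_map, length_OV; auto. }
  intros k x A a E1 E2. rewrite firstn_map, subst_ty_idsub.
  unfold OV in E2. rewrite nth_error_map, nth_error_map, E1 in E2. simpl in E2.
  inversion E2; subst. apply R3; auto. apply Hi. eapply nth_error_In; eauto.
Qed.

Lemma firstn_app_le {X : Type} k (l1 l2 : list X) : k <= length l1 ->
  firstn k (l1 ++ l2) = firstn k l1.
Proof. intros. rewrite firstn_app. replace (k - length l1) with 0 by lia. simpl. apply app_nil_r. Qed.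

Lemma sub_app_in (xs ys : list V) (ss bs : list preel) x :
  length xs = length ss -> In x xs -> sub (xs ++ ys) (ss ++ bs) x = sub xs ss x.
Proof.
  intros Hl Hi. unfold sub. rewrite lookup_app by auto.
  destruct (@lookup_in xs ss x Hi ltac:(lia)) as [a Ha]. rewrite Ha; auto.
Qed.

Lemma sub_app_notin (xs : list V) (ss : list preel) y b :
  length xs = length ss -> ~ In y xs -> sub (xs ++ [y]) (ss ++ [b]) y = b.
Proof.
  intros Hl Hi. unfold sub. rewrite lookup_app by auto. rewrite lookup_notin by auto.
  simpl. destruct (var_eq_dec VS y y); congruence.
Qed.

Lemma ext_ob (G : ctx) S0 : FS_isOb Sg G -> deriv Sg (JTy G S0) ->
  FS_isOb Sg (CExt G (fresh G) S0).
Proof.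
  intros [HG dG] dS. split.
  - simpl. split; auto. split. apply fr_phi. apply (deriv_WF dS).
  - apply R2; auto. apply fr_phi.
Qed.


Lemma cwf_ok : is_cwf (F_Sigma Sg).
Proof.
  unfold is_cwf; simpl.
  split; [|split; [|split; [|split; [|split; [|split; [|split; [|split; [|split;
    [|split; [|split; [|split; [|split; [|split; [|split; [|split]]]]]]]]]]]]]]].
  -
    intros D G H f g HD HG HH [_ [_ [fs [-> Hf]]]] [_ [_ [gs [-> Hg]]]]. simpl.
    split; auto. split; auto. eexists; split; [reflexivity|].
    unfold subst_el_ctx. eapply cm_compose; eauto.
  - intros G HG. split; auto. split; auto. eexists; split; [reflexivity|].
    apply cm_pr; try apply HG; auto.
  - intros A B D E f g h _ _ _ _ [_ [_ [fs [-> Hf]]]] [_ [_ [gs [-> Hg]]]]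
      [_ [_ [hs [-> Hh]]]]. simpl. f_equal. rewrite map_map. apply map_ext_in.
    intros t Ht. unfold subst_el_ctx. symmetry. apply sub_comp_el.
    + eapply cm_vars'; eauto.
    + destruct Hg as [_ [_ [cl _]]]. rewrite length_OV, cl; auto.
  - intros D G f HD [HG _] [_ [_ [fs [-> Hf]]]]. simpl. split.
    + f_equal. rewrite map_map. simpl. apply map_sub_self. apply pc_nodup; auto.
      destruct Hf as [_ [_ [cl _]]]. rewrite length_OV; auto.
    + f_equal. unfold subst_el_ctx. erewrite map_ext; [apply map_id|].
      intros; apply subst_el_idsub.
  - split; simpl; auto. apply R1.
  - intros G HG. exists (G, CEmpty VS F T, []). split.
    + split; auto. split. { split; simpl; auto. apply R1. }
      eexists; split; [reflexivity|]. split. apply HG. split. apply R1. split; auto.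
      intros k x A a E1. destruct k; discriminate.
    + intros g [_ [_ [gs [-> [_ [_ [cl _]]]]]]]. destruct gs; simpl in cl; try discriminate.
      reflexivity.
  - intros D G f A HD HG [_ [_ [fs [-> Hf]]]] [A0 [-> HA]]. simpl.
    eexists; split; [reflexivity|]. apply subst_lemma_ty; auto.
  - intros G A HG [A0 [-> HA]]. simpl. f_equal. apply subst_ty_idsub.
  - intros E D G f g A HE HD HG [_ [_ [fs [-> Hf]]]] [_ [_ [gs [-> Hg]]]] [A0 [-> HA]].
    simpl. f_equal. unfold subst_ty_ctx, subst_el_ctx. symmetry. apply sub_comp_ty.
    + apply (deriv_WF HA).
    + destruct Hf as [_ [_ [cl _]]]. rewrite length_OV, cl; auto.
  - intros D G f A a HD HG [_ [_ [fs [-> Hf]]]] [A0 [-> HA]] [A1 [a0 [E1 [-> Ha]]]].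
    inversion E1; subst. simpl. do 2 eexists; split; [reflexivity|]. split; [reflexivity|].
    apply subst_lemma_tm; auto.
  - intros G A a HG [A0 [-> HA]] [A1 [a0 [E1 [-> Ha]]]]. inversion E1; subst. simpl.
    f_equal. f_equal. apply subst_ty_idsub. apply subst_el_idsub.
  - intros E D G f g A a HE HD HG [_ [_ [fs [-> Hf]]]] [_ [_ [gs [-> Hg]]]] [A0 [-> HA]]
      [A1 [a0 [E1 [-> Ha]]]]. inversion E1; subst. simpl.
    unfold subst_ty_ctx, subst_el_ctx. destruct Hf as [_ [_ [cl _]]].
    f_equal; [f_equal|]; symmetry.
    + apply sub_comp_ty. apply (deriv_WF HA). rewrite length_OV, cl; auto.
    + apply sub_comp_el. apply (deriv_WF Ha). rewrite length_OV, cl; auto.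
  - intros G A HG [A0 [-> HA]]. simpl. pose proof (ext_ob HG HA) as Hx. split; auto.
    split; auto. split; auto. eexists; split; [reflexivity|].
    apply cm_pr; try apply Hx; try apply HG. simpl. intros p Hp. apply in_or_app; auto.
  - intros G A HG [A0 [-> HA]]. simpl. do 2 eexists. split; [reflexivity|].
    split; [f_equal; f_equal; symmetry; apply subst_ty_idsub|].
    apply R3. apply (ext_ob HG HA). simpl. apply in_or_app; right; left. unfold subst_ty_ctx; rewrite subst_ty_idsub; auto.
  - intros D G A f a HD HG [A0 [-> HA]] [_ [_ [ss [-> Hf]]]] [A1 [b [E1 [-> Hb]]]].
    inversion E1; subst. simpl.
    assert (Hfr : ~ In (fresh G) (OV G)) by (apply phi_avoid; apply fr_phi).
    assert (Hnd : NoDup (OV G)) by (apply pc_nodup; apply HG).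
    pose proof (proj1 (proj2 (proj2 Hf))) as cl.
    assert (cl' : length (OV G) = length ss) by (rewrite length_OV; auto).
    split; [|split].
    + split; auto. split. { apply ext_ob; auto. } eexists; split; [reflexivity|].
      split. apply HD. split. apply (ext_ob HG HA). split.
      { simpl. rewrite !length_app; simpl; lia. }
      intros k x B a E2 E3. simpl in E2. rewrite OV_ext.
      destruct (Nat.lt_ge_cases k (length (ctx_list G))).
      * rewrite nth_error_app1 in E2 by auto. rewrite nth_error_app1 in E3 by lia.
        rewrite !firstn_app_le by lia. apply (proj2 (proj2 (proj2 Hf)) k x B a E2 E3).
      * rewrite nth_error_app2 in E2 by auto. rewrite nth_error_app2 in E3 by lia.
        assert (k = length (ctx_list G)).
        { destruct (k - length (ctx_list G)) eqn:Ek; [lia|]. destruct n; simpl in E2; discriminate. }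
        subst k. rewrite Nat.sub_diag in E2. rewrite cl, Nat.sub_diag in E3.
        simpl in E2, E3. inversion E2; inversion E3; subst.
        rewrite !firstn_app_le by lia.
        replace (firstn (length (ctx_list G)) (OV G)) with (OV G)
          by (rewrite <- length_OV, firstn_all; auto).
        replace (firstn (length (ctx_list G)) ss) with ss by (rewrite <- cl, firstn_all; auto).
        exact Hb.
    + f_equal. rewrite map_map. unfold subst_el_ctx; simpl. rewrite OV_ext.
      transitivity (map (sub (OV G) ss) (OV G)).
      * apply map_ext_in; intros; apply sub_app_in; auto.
      * apply map_sub_self; auto.
    + unfold subst_ty_ctx, subst_el_ctx; simpl; rewrite OV_ext. f_equal; [f_equal|].
      * apply subst_ty_ext; intros; apply sub_app_in; auto. apply (deriv_WF HA); auto.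
      * apply sub_app_notin; auto.
  - intros D G A h HD HG [A0 [-> HA]] [_ [_ [hs [-> Hh]]]]. simpl.
    assert (Hfr : ~ In (fresh G) (OV G)) by (apply phi_avoid; apply fr_phi).
    assert (Hnd : NoDup (OV G)) by (apply pc_nodup; apply HG).
    pose proof (proj1 (proj2 (proj2 Hh))) as cl. simpl in cl. rewrite length_app in cl.
    simpl in cl. destruct (@exists_last _ hs) as [l [c ->]].
    { intros ->. simpl in cl. lia. }
    rewrite length_app in cl; simpl in cl.
    assert (cl' : length (OV G) = length l) by (rewrite length_OV; lia).
    f_equal. unfold subst_el_ctx; simpl. rewrite OV_ext, map_map. simpl.
    rewrite sub_app_notin by auto. f_equal.
    transitivity (map (sub (OV G) l) (OV G)).
    * apply map_ext_in; intros; apply sub_app_in; auto.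
    * apply map_sub_self; auto.
  - intros E D G A f a g HE HD HG [A0 [-> HA]] [_ [_ [fs [-> Hf]]]]
      [A1 [a0 [E1 [-> Ha]]]] [_ [_ [gs [-> Hg]]]]. simpl. rewrite map_app. reflexivity.
Qed.

Fixpoint tys (G : ctx) : list (ctx * pretype) :=
  match G with CEmpty _ _ _ => [] | CExt G' x A => tys G' ++ [(G', A)] end.

Lemma tele_tys (As : list (ctx * pretype)) : forall G0,
  tele (F_Sigma Sg) G0 As -> tys (tele_end (F_Sigma Sg) G0 As) = tys G0 ++ As.
Proof.
  induction As as [|A As IH]; simpl; intros G0 H. { rewrite app_nil_r; auto. }
  destruct H as [[A0 [-> HA]] Ht]. rewrite IH; auto. simpl. rewrite <- app_assoc. reflexivity.
Qed.

Lemma tele_end_app (As1 As2 : list (ctx * pretype)) : forall G0,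
  tele_end (F_Sigma Sg) G0 (As1 ++ As2) = tele_end (F_Sigma Sg) (tele_end (F_Sigma Sg) G0 As1) As2.
Proof. induction As1; simpl; auto. Qed.

Lemma tele_app (As1 As2 : list (ctx * pretype)) : forall G0,
  tele (F_Sigma Sg) G0 As1 -> tele (F_Sigma Sg) (tele_end (F_Sigma Sg) G0 As1) As2 ->
  tele (F_Sigma Sg) G0 (As1 ++ As2).
Proof. induction As1; simpl; intros G0 H1 H2; auto. destruct H1; split; auto. Qed.

Lemma tys_ok (HdB : de_Bruijn VS) (G : ctx) : FS_isOb Sg G ->
  tele (F_Sigma Sg) (CEmpty VS F T) (tys G) /\ tele_end (F_Sigma Sg) (CEmpty VS F T) (tys G) = G.
Proof.
  induction G as [|G IH x A]; intros [Hpc Hd]. { simpl; auto. }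
  inversion Hd; subst. simpl in Hpc.
  assert (x = fresh G) by (apply HdB; auto). subst x.
  destruct IH as [IH1 IH2]. { split; auto. apply Hpc. }
  simpl. split.
  - apply tele_app; auto. rewrite IH2. simpl. split; auto. eexists; split; eauto.
  - rewrite tele_end_app, IH2. reflexivity.
Qed.

Lemma contextual_ok (HdB : de_Bruijn VS) : is_contextual_cwf (F_Sigma Sg).
Proof.
  split. apply cwf_ok. intros G HG. exists (tys G). split. apply tys_ok; auto.
  intros As [Ht He]. pose proof (tele_tys Ht) as E. rewrite He in E. simpl in E. auto.
Qed.
End S.
Unset Implicit Arguments.

Theorem mainTheorem12 (VS : VarSystem) (F T : Type)
  (F_eq_dec : forall f g : F, {f = g} + {f <> g})
  (T_eq_dec : forall S S' : T, {S = S'} + {S <> S'})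
  (Sg : presig VS F T) (HSg : is_signature Sg) :
  is_cwf (F_Sigma Sg) /\ (de_Bruijn VS -> is_contextual_cwf (F_Sigma Sg)).
Proof.
  split. apply cwf_ok; auto. intros; apply contextual_ok; auto.
Qed.
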